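(* Let $n\ge1$, $r\ge0$ an integer, and $g,h$ formal power series in one variable. Then $$\int\mathcal{D}_n(\psi,\bar\psi)\,(\bar\psi,\psi)^r\,\exp\!\Big[h\big((\bar\psi,\psi)\big)+(\bar\psi,J\psi)\,g\big((\bar\psi,\psi)\big)\Big]=\int\mathcal{D}_n(\psi,\bar\psi)\,(\bar\psi,\psi)^r\,e^{h((\bar\psi,\psi))}\Big[1+(\bar\psi,\psi)\,g\big((\bar\psi,\psi)\big)\Big].$$
   Context: Grassmann algebra over $\mathbb{C}$ generated by anticommuting $\psi_1,\dots,\psi_n,\bar\psi_1,\dots,\bar\psi_n$; $\int\mathcal{D}_n(\psi,\bar\psi)$ is the Berezin integral returning the coefficient of $\prod_{i=1}^n(\bar\psi_i\psi_i)$ (convention $\int d\bar\psi_i d\psi_i\,\bar\psi_i\psi_i=1$). $(\bar\psi,\psi):=\sum_{i=1}^n\bar\psi_i\psi_i$ and $(\bar\psi,J\psi):=\sum_{i,j=1}^n\bar\psi_i\psi_j$, where $J$ is the $n\times n$ all-ones matrix. Functions of the nilpotent even elements are defined by their (terminating) power series. *)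

(* Defs.v *)
From HB Require Import structures.
From mathcomp Require Import all_boot all_order all_algebra.
Set Implicit Arguments. Unset Strict Implicit. Unset Printing Implicit Defensive.
Import Order.TTheory GRing.Theory Num.Theory.
Local Open Scope ring_scope.

(* Generators: (i, false) = psibar_(i+1), (i, true) = psi_(i+1).
   They are totally ordered by grank:
   psibar_1 < psi_1 < psibar_2 < psi_2 < ... < psibar_n < psi_n. *)
Definition gen (n : nat) : finType := ('I_n * bool)%type.
Definition grank (n : nat) (x : gen n) : nat := (2 * x.1 + x.2)%N.

(* An element of the Grassmann algebra: the coefficient of the ordered
   monomial e_S = prod_{x in S, increasing grank} x, for each subset S. *)
Definition grass (R : nzRingType) (n : nat) := {ffun {set gen n} -> R}.

(* sign of e_A e_B = sgn * e_(A u B) for disjoint A, B *)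
Definition gsign (R : nzRingType) (n : nat) (A B : {set gen n}) : R :=
  (-1) ^+ #|[set p : gen n * gen n |
              (p.1 \in A) && (p.2 \in B) && (grank p.2 < grank p.1)%N]|.

Definition gmul (R : nzRingType) (n : nat) (a b : grass R n) : grass R n :=
  [ffun S : {set gen n} =>
     \sum_(A : {set gen n} | A \subset S) gsign R A (S :\: A) * a A * b (S :\: A)].

Definition gadd (R : nzRingType) (n : nat) (a b : grass R n) : grass R n :=
  [ffun S => a S + b S].

Definition gscal (R : nzRingType) (n : nat) (c : R) : grass R n :=
  [ffun S : {set gen n} => if S == set0 then c else 0].

Definition gone (R : nzRingType) (n : nat) : grass R n := gscal n 1.

Definition gscale (R : nzRingType) (n : nat) (c : R) (a : grass R n) : grass R n :=
  [ffun S => c * a S].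

Definition ggen (R : nzRingType) (n : nat) (x : gen n) : grass R n :=
  [ffun S : {set gen n} => if S == [set x] then 1 else 0].

Definition psibar (R : nzRingType) (n : nat) (i : 'I_n) : grass R n := ggen R (i, false).
Definition psi (R : nzRingType) (n : nat) (i : 'I_n) : grass R n := ggen R (i, true).

Definition gsum (R : nzRingType) (n : nat) (I : finType) (F : I -> grass R n) : grass R n :=
  [ffun S => \sum_(i : I) F i S].

Definition gpow (R : nzRingType) (n : nat) (a : grass R n) (k : nat) : grass R n :=
  iter k (gmul a) (gone R n).

(* (psibar, psi) = sum_i psibar_i psi_i *)
Definition pp (R : nzRingType) (n : nat) : grass R n :=
  gsum (fun i : 'I_n => gmul (psibar R i) (psi R i)).

(* (psibar, J psi) = sum_{i,j} psibar_i psi_j *)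
Definition pJp (R : nzRingType) (n : nat) : grass R n :=
  gsum (fun ij : 'I_n * 'I_n => gmul (psibar R ij.1) (psi R ij.2)).

(* Evaluation of a formal power series f = sum_k f k X^k at an element X
   with zero body (constant part): every product of 2n+1 generators
   vanishes, so X^(2n+1) = 0 and the series terminates. *)
Definition psev (R : nzRingType) (n : nat) (f : nat -> R) (X : grass R n) : grass R n :=
  gsum (fun k : 'I_(2 * n).+1 => gscale (f k) (gpow X k)).

(* Exponential of an even element X = c + N with body c = X set0 and
   N nilpotent: exp X = e^c * sum_k N^k / k!.  The scalar exponential
   e^c is supplied by the parameter expR (over C this is the usual exp). *)
Definition gexp (R : fieldType) (expR : R -> R) (n : nat) (X : grass R n) : grass R n :=
  let N := gadd X (gscal n (- X set0)) in
  gscale (expR (X set0))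
         (gsum (fun k : 'I_(2 * n).+1 => gscale (k`!%:R)^-1 (gpow N k))).

(* Berezin integral: coefficient of prod_{i=1}^n (psibar_i psi_i), which is
   exactly the ordered top monomial e_{setT} for our ordering. *)
Definition berezin (R : nzRingType) (n : nat) (a : grass R n) : R := a setT.

(* Main.v *)
Set Warnings "-notation-overridden,-ambiguous-paths,-redundant-canonical-projection".
Require Import Defs.
From HB Require Import structures.
From mathcomp Require Import all_boot all_order all_algebra.
Set Implicit Arguments. Unset Strict Implicit. Unset Printing Implicit Defensive.
Import Order.TTheory GRing.Theory Num.Theory.
Local Open Scope ring_scope.

Section Signs.
Variable n : nat.
Implicit Types X Y Z : {set gen n}.

Definition invs X Y : {set gen n * gen n} :=
  [set p : gen n * gen n | (p.1 \in X) && (p.2 \in Y) && (grank p.2 < grank p.1)%N].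

Lemma grank_inj : injective (@grank n).
Proof.
move=> [i b] [j c]; rewrite /grank /= => E.
rewrite !mul2n in E.
have Hb : b = c.
  by move: (congr1 odd E); rewrite !oddD !odd_double; case: (b); case: (c).
subst c; move/eqP: E; rewrite eqn_add2r -!muln2.
by rewrite eqn_pmul2r // => /eqP/val_inj->.
Qed.

Lemma invsUl X Y Z : [disjoint X & Y] ->
  #|invs (X :|: Y) Z| = (#|invs X Z| + #|invs Y Z|)%N.
Proof.
move=> dXY.
have -> : invs (X :|: Y) Z = invs X Z :|: invs Y Z.
  by apply/setP=> p; rewrite !inE !andb_orl.
rewrite cardsU.
have -> : invs X Z :&: invs Y Z = set0.
  apply/setP=> p; rewrite !inE.
  case hX: (p.1 \in X); case hY: (p.1 \in Y); rewrite ?andbF ?andFb //=.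
  by move: dXY => /disjointFr /(_ hX); rewrite hY.
by rewrite cards0 subn0.
Qed.

Lemma invsUr X Y Z : [disjoint Y & Z] ->
  #|invs X (Y :|: Z)| = (#|invs X Y| + #|invs X Z|)%N.
Proof.
move=> dYZ.
have -> : invs X (Y :|: Z) = invs X Y :|: invs X Z.
  by apply/setP=> p; rewrite !inE andb_orr andb_orl.
rewrite cardsU.
have -> : invs X Y :&: invs X Z = set0.
  apply/setP=> p; rewrite !inE.
  case hX: (p.2 \in Y); case hY: (p.2 \in Z); rewrite ?andbF ?andFb //=.
  by move: dYZ => /disjointFr /(_ hX); rewrite hY.
by rewrite cards0 subn0.
Qed.

Lemma invs_swap X Y : [disjoint X & Y] ->
  (#|invs X Y| + #|invs Y X|)%N = (#|X| * #|Y|)%N.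
Proof.
move=> dXY.
pose sw (p : gen n * gen n) := (p.2, p.1).
have swK : involutive sw by case.
have -> : #|invs Y X| = #|sw @: invs Y X| by rewrite card_imset //; exact: inv_inj.
have -> : sw @: invs Y X = [set p : gen n * gen n | (p.1 \in X) && (p.2 \in Y) && (grank p.1 < grank p.2)%N].
  apply/setP=> p; apply/imsetP/idP.
    by case=> q; rewrite !inE /sw => /andP[/andP[h1 h2] h3] ->; rewrite /= h1 h2 h3.
  rewrite !inE => /andP[/andP[h1 h2] h3]; exists (sw p); last by rewrite swK.
  by rewrite inE /sw /= h1 h2 h3.
set I2 := [set p : gen n * gen n | (p.1 \in X) && (p.2 \in Y) && (grank p.1 < grank p.2)%N].
rewrite -cardsX.
have -> : setX X Y = invs X Y :|: I2.
  apply/setP=> p; rewrite !inE.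
  case h1: (p.1 \in X); case h2: (p.2 \in Y) => //=.
  have ne : p.1 != p.2.
    by apply/eqP=> E; move: dXY => /disjointFr /(_ h1); rewrite E h2.
  rewrite -neq_ltn eq_sym; apply/esym; apply: contra ne => /eqP E.
  by apply/eqP; apply: grank_inj.
rewrite cardsU.
have -> : invs X Y :&: I2 = set0.
  apply/setP=> p; rewrite !inE; apply/negbTE; apply/negP => /andP[/andP[_ h] /andP[_ h']].
  by move: (ltn_trans h h'); rewrite ltnn.
by rewrite cards0 subn0.
Qed.

End Signs.
Lemma rearr (R : comNzRingType) (x1 x2 x3 x4 x5 x6 : R) :
  x1*x2*x3*(x4*x5*x6) = x2*x4*(x1*x3*x5)*x6.
Proof.
rewrite !mulrA; congr (_ * _ * _).
by rewrite (mulrAC (x1*x2)) [x1*x2]mulrC (mulrAC x2).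
Qed.

Section Alg.
Variables (R : comNzRingType) (n : nat).
Local Notation GR := (grass R n).
Implicit Types (X Y Z S A B C D : {set gen n}) (a b c : GR).

Lemma gsignE X Y : gsign R X Y = (-1) ^+ #|invs X Y|.
Proof. by []. Qed.

Lemma gsign_sq X Y : gsign R X Y * gsign R X Y = 1.
Proof. by rewrite gsignE -exprD -signr_odd addnn odd_double expr0. Qed.

Lemma gsignUl X Y Z : [disjoint X & Y] ->
  gsign R (X :|: Y) Z = gsign R X Z * gsign R Y Z.
Proof. by move=> d; rewrite !gsignE invsUl // exprD. Qed.

Lemma gsignUr X Y Z : [disjoint Y & Z] ->
  gsign R X (Y :|: Z) = gsign R X Y * gsign R X Z.
Proof. by move=> d; rewrite !gsignE invsUr // exprD. Qed.

Lemma gsign_swap X Y : [disjoint X & Y] ->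
  gsign R X Y * gsign R Y X = (-1) ^+ (#|X| * #|Y|).
Proof. by move=> d; rewrite !gsignE -exprD invs_swap. Qed.

Lemma gsign0l X : gsign R set0 X = 1.
Proof.
rewrite gsignE; suff -> : invs set0 X = set0 by rewrite cards0.
by apply/setP=> p; rewrite !inE.
Qed.

Lemma gsign0r X : gsign R X set0 = 1.
Proof.
rewrite gsignE; suff -> : invs X set0 = set0 by rewrite cards0.
by apply/setP=> p; rewrite !inE andbF.
Qed.

Lemma gmulE a b S :
  gmul a b S = \sum_(A : {set gen n} | A \subset S) gsign R A (S :\: A) * a A * b (S :\: A).
Proof. by rewrite ffunE. Qed.

Lemma gmul_supp a b S : gmul a b S != 0 ->
  exists2 D : {set gen n}, D \subset S & (a D != 0) && (b (S :\: D) != 0).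
Proof.
rewrite gmulE => H.
case: (pickP (fun D => (D \subset S) && (a D != 0) && (b (S :\: D) != 0))).
  by move=> D /andP[/andP[h1 h2] h3]; exists D => //; rewrite h2 h3.
move=> N; move: H; rewrite big1 ?eqxx // => D hD.
move: (N D); rewrite hD /=; case: eqP => [->|_]; first by rewrite mulr0 mul0r.
by case: eqP => [->|] //; rewrite mulr0.
Qed.

Lemma gmul1l a : gmul (gone R n) a = a.
Proof.
apply/ffunP=> S; rewrite gmulE (bigD1 set0) ?sub0set //= big1.
  by rewrite addr0 gsign0l mul1r /gone /gscal ffunE eqxx mul1r setD0.
by move=> D /andP[_ hD]; rewrite /gone /gscal ffunE (negbTE hD) mulr0 mul0r.
Qed.

Lemma gmul1r a : gmul a (gone R n) = a.
Proof.
apply/ffunP=> S; rewrite gmulE (bigD1 S) ?subxx //= big1.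
  by rewrite addr0 setDv gsign0r mul1r /gone /gscal ffunE eqxx mulr1.
move=> D /andP[hDS hD]; rewrite /gone /gscal ffunE setD_eq0.
case: ifP => [hSD|_]; last by rewrite mulr0.
by move: hD; rewrite eqEsubset hDS hSD.
Qed.

Lemma gmulDl a b c : gmul (a + b) c = gmul a c + gmul b c.
Proof.
apply/ffunP=> S; rewrite !ffunE -big_split; apply: eq_bigr => D _ /=.
by rewrite ffunE mulrDr mulrDl.
Qed.

Lemma gmulDr a b c : gmul a (b + c) = gmul a b + gmul a c.
Proof.
apply/ffunP=> S; rewrite !ffunE -big_split; apply: eq_bigr => D _ /=.
by rewrite ffunE mulrDr.
Qed.

Lemma gone_neq0 : gone R n != 0.
Proof.
apply/eqP => /ffunP /(_ set0); rewrite /gone /gscal !ffunE eqxx => /eqP.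
by rewrite oner_eq0.
Qed.

Lemma gmulA a b c : gmul a (gmul b c) = gmul (gmul a b) c.
Proof.
apply/ffunP=> S; rewrite !gmulE.
under eq_bigr => A _ do rewrite gmulE mulr_sumr.
under [RHS]eq_bigr => D _ do rewrite gmulE mulr_sumr mulr_suml.
rewrite [RHS](exchange_big_dep (fun A => A \subset S)) /=; last first.
  by move=> D A hD hA; exact: (subset_trans hA hD).
apply: eq_bigr => A hAS.
rewrite [RHS](reindex_onto (fun B => A :|: B) (fun D => D :\: A)) /=; last first.
  move=> D /andP[_ hAD]; apply/setP=> x; rewrite !inE.
  by case hx: (x \in A) => //=; rewrite (subsetP hAD).
apply: eq_big => [B|B hB].
  rewrite subsetD subUset hAS subsetUl /= setDUl setDv set0U.
  by case: (B \subset S) => //=; apply/idP/eqP => /setDidPl.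
move: (hB); rewrite subsetD => /andP[hBS dBA].
have e1 : (A :|: B) :\: A = B.
  by rewrite setDUl setDv set0U; apply/setDidPl.
have e2 : S :\: (A :|: B) = S :\: A :\: B by rewrite setDDl.
rewrite e1 e2.
set C := S :\: A :\: B.
have e3 : S :\: A = B :|: C.
  apply/setP=> x; rewrite /C !inE.
  by case hx: (x \in B) => //=; move: (subsetP hB x hx); rewrite !inE.
have dBC : [disjoint B & C].
  by rewrite -setI_eq0; apply/eqP/setP=> x; rewrite /C !inE; case: (x \in B); rewrite ?andbF.
have dAB : [disjoint A & B] by rewrite disjoint_sym.
rewrite e3 gsignUr // gsignUl //.
exact: rearr.
Qed.

End Alg.

Definition GA (R : comNzRingType) (n : nat) : Type := grass R n.
HB.instance Definition _ (R : comNzRingType) (n : nat) := GRing.Zmodule.on (GA R n).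
HB.instance Definition _ (R : comNzRingType) (n : nat) :=
  GRing.Zmodule_isNzRing.Build (GA R n) (@gmulA R n) (@gmul1l R n) (@gmul1r R n)
    (@gmulDl R n) (@gmulDr R n) (@gone_neq0 R n).

Section Test.
Variables (R : comNzRingType) (n : nat).
Lemma gmulM (a b : GA R n) : gmul a b = a * b.
Proof. by []. Qed.
Lemma goneE : gone R n = 1 :> GA R n.
Proof. by []. Qed.
Lemma gaddE (a b : GA R n) : gadd a b = a + b.
Proof. by apply/ffunP => S; rewrite !ffunE. Qed.
Lemma gpowE (a : GA R n) k : gpow a k = a ^+ k.
Proof. by elim: k => [|k IH] //=; rewrite exprS -IH. Qed.
End Test.

Section Test2.
Variables (R : comNzRingType) (n : nat).
Local Notation G := (GA R n).
Lemma gaddS (a b : G) S : (a + b) S = a S + b S.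
Proof. by rewrite ffunE. Qed.
Lemma goppS (a : G) S : (- a) S = - a S.
Proof. by rewrite ffunE. Qed.
Lemma gzeroS S : (0 : G) S = 0.
Proof. by rewrite ffunE. Qed.
Lemma gsumS (I : finType) (P : pred I) (F : I -> G) S : (\sum_(i | P i) F i) S = \sum_(i | P i) F i S.
Proof. exact: sum_ffunE. Qed.
End Test2.

Section Supp.
Variables (R : comNzRingType) (n : nat).
Local Notation G := (GA R n).
Implicit Types (a b c : G) (S D X Y : {set gen n}).

Definition supp (P : {set gen n} -> Prop) (a : G) := forall S, a S != 0 -> P S.

Lemma supp0 P : supp P 0.
Proof. by move=> S; rewrite gzeroS eqxx. Qed.

Lemma suppD P a b : supp P a -> supp P b -> supp P (a + b).
Proof.
move=> ha hb S; rewrite gaddS.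
case: (eqVneq (a S) 0) => [->|/ha //]; rewrite add0r; exact: hb.
Qed.

Lemma suppN P a : supp P a -> supp P (- a).
Proof. by move=> ha S; rewrite goppS oppr_eq0; exact: ha. Qed.

Lemma supp_sum P (I : finType) (Q : pred I) (F : I -> G) :
  (forall i, Q i -> supp P (F i)) -> supp P (\sum_(i | Q i) F i).
Proof.
move=> h; apply: (big_ind (supp P)); [exact: supp0|exact: suppD|exact: h].
Qed.

Lemma supp_impl (P Q : {set gen n} -> Prop) a :
  (forall S, P S -> Q S) -> supp P a -> supp Q a.
Proof. by move=> h ha S /ha; exact: h. Qed.

Lemma suppM (P Q T : {set gen n} -> Prop) a b :
  supp P a -> supp Q b ->
  (forall D S, D \subset S -> P D -> Q (S :\: D) -> T S) -> supp T (a * b).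
Proof.
move=> ha hb h S /gmul_supp [D hDS /andP[h1 h2]].
exact: (h D S hDS (ha _ h1) (hb _ h2)).
Qed.

Lemma supp_gscal (k : R) : supp (fun S => S = set0) (gscal n k : G).
Proof. by move=> S; rewrite ffunE; case: ifP => [/eqP //|]; rewrite eqxx. Qed.

Lemma supp_ggen (x : gen n) : supp (fun S => S = [set x]) (ggen R x : G).
Proof. by move=> S; rewrite ffunE; case: ifP => [/eqP //|]; rewrite eqxx. Qed.

Lemma cardsD_sub D S : D \subset S -> #|S| = (#|D| + #|S :\: D|)%N.
Proof. by move=> h; rewrite -(cardsID D S) (setIidPr h). Qed.

Lemma setDDK D S : D \subset S -> S :\: (S :\: D) = D.
Proof.
move=> h; apply/setP=> x; rewrite !inE.
case hx: (x \in D) => /=; first by rewrite (subsetP h).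
by case: (x \in S).
Qed.

Lemma disjointD D S : [disjoint D & S :\: D].
Proof.
by rewrite -setI_eq0; apply/eqP/setP=> x; rewrite !inE; case: (x \in D).
Qed.

Lemma gmul_rev a b S :
  gmul b a S = \sum_(D : {set gen n} | D \subset S)
                 gsign R (S :\: D) D * b (S :\: D) * a D.
Proof.
rewrite gmulE (reindex_onto (fun D => S :\: D) (fun D => S :\: D)) /=; last first.
  by move=> D hD; rewrite setDDK.
apply: eq_big => [D|D /andP[_ /eqP ->]] //.
rewrite subsetDl /=; apply/eqP/idP => [<-|h]; first exact: subsetDl.
exact: setDDK.
Qed.

Lemma gsign_sym X Y : [disjoint X & Y] -> ~~ odd (#|X| * #|Y|) ->
  gsign R Y X = gsign R X Y.
Proof.
move=> d o; have := gsign_swap R d; rewrite -signr_odd (negbTE o) expr0 => h.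
by rewrite -[LHS]mul1r -(gsign_sq R X Y) -mulrA h mulr1.
Qed.

Lemma gsign_asym X Y : [disjoint X & Y] -> odd (#|X| * #|Y|) ->
  gsign R Y X = - gsign R X Y.
Proof.
move=> d o; have := gsign_swap R d; rewrite -signr_odd o expr1 => h.
by rewrite -[LHS]mul1r -(gsign_sq R X Y) -mulrA h mulrN1.
Qed.

Definition evs S := ~~ odd #|S|.
Definition ods S := odd #|S|.

Lemma even_comm a b : supp evs a -> a * b = b * a.
Proof.
move=> ha; apply/ffunP=> S; change (gmul a b S = gmul b a S).
rewrite gmulE gmul_rev; apply: eq_bigr => D hD.
case: (eqVneq (a D) 0) => [->|/ha he]; first by rewrite !(mulr0, mul0r).
rewrite /evs in he.
rewrite gsign_sym; [|by rewrite disjoint_sym disjointD|by rewrite oddM negb_and he orbT].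
by rewrite -!mulrA [a D * _]mulrC.
Qed.

Lemma odd_anticomm a b : supp ods a -> supp ods b -> a * b = - (b * a).
Proof.
move=> ha hb; apply/ffunP=> S; rewrite goppS; change (gmul a b S = - gmul b a S).
rewrite gmulE gmul_rev -sumrN; apply: eq_bigr => D hD.
case: (eqVneq (a D) 0) => [->|/ha h1]; first by rewrite !(mulr0, mul0r, oppr0).
case: (eqVneq (b (S :\: D)) 0) => [->|/hb h2]; first by rewrite !(mulr0, mul0r, oppr0).
rewrite /ods in h1 h2.
rewrite gsign_asym; [|by rewrite disjoint_sym disjointD|by rewrite oddM h1 h2].
by rewrite !mulNr -!mulrA [a D * _]mulrC.
Qed.

End Supp.

Section Spec.
Variables (R : numFieldType) (n : nat).
Local Notation G := (GA R n).
Implicit Types (a b x y : G) (S D : {set gen n}).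

Definition sc (k : R) : G := gscal n k.

Lemma scS k a S : (sc k * a) S = k * a S.
Proof.
change (gmul (gscal n k) a S = k * a S).
rewrite gmulE (bigD1 set0) ?sub0set //= big1.
  by rewrite addr0 gsign0l mul1r ffunE eqxx setD0.
by move=> D /andP[_ hD]; rewrite ffunE (negbTE hD) mulr0 mul0r.
Qed.

Lemma sc_comm k a : sc k * a = a * sc k.
Proof.
apply: even_comm; apply: supp_impl (@supp_gscal R n k) => S ->.
by rewrite /evs cards0.
Qed.

Lemma sc1 : sc 1 = 1. Proof. by []. Qed.

Lemma scD k l : sc (k + l) = sc k + sc l.
Proof. by apply/ffunP=> S; rewrite gaddS !ffunE; case: ifP; rewrite ?addr0. Qed.

Lemma sc0 : sc 0 = 0.
Proof. by apply/ffunP=> S; rewrite gzeroS !ffunE; case: ifP. Qed.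

Lemma scM k l : sc (k * l) = sc k * sc l.
Proof. by apply/ffunP=> S; rewrite scS !ffunE; case: ifP; rewrite ?mulr0. Qed.

Lemma sc_nat m : sc m%:R = m%:R.
Proof. by elim: m => [|m IH]; rewrite ?sc0 // !mulrS scD sc1 IH. Qed.

Lemma gscaleE k (a : G) : gscale k a = sc k * a.
Proof. by apply/ffunP=> S; rewrite scS /gscale ffunE. Qed.

Lemma gsumE (I : finType) (F : I -> G) : gsum F = \sum_i F i.
Proof. by apply/ffunP=> S; rewrite gsumS ffunE. Qed.

Lemma gaddE' (a b : G) : gadd a b = a + b.
Proof. by apply/ffunP => S; rewrite gaddS /gadd. Qed.

Lemma psevE f (X : G) : psev f X = \sum_(k < (2 * n).+1) sc (f k) * X ^+ k.
Proof. by rewrite /psev gsumE; apply: eq_bigr => k _; rewrite gscaleE gpowE. Qed.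

Definition EE (Y : G) : G := \sum_(k < (2 * n).+1) sc ((k`!%:R)^-1) * Y ^+ k.

Lemma gexpE expR (X : G) : gexp expR X = sc (expR (X set0)) * EE (X + sc (- X set0)).
Proof.
rewrite /gexp gscaleE gsumE /EE; apply: congr1; apply: eq_bigr => k _.
by rewrite gscaleE gpowE gaddE'.
Qed.

Definition dg d S := (d <= #|S|)%N.
Definition prs S := forall i : 'I_n, ((i, false) \in S) = ((i, true) \in S).

Lemma card_gen S : (#|S| <= 2 * n)%N.
Proof. by rewrite (leq_trans (max_card _)) // card_prod card_ord card_bool mulnC. Qed.

Lemma suppM_ev a b : supp (fun S => evs S) a -> supp (fun S => evs S) b -> supp (fun S => evs S) (a * b).
Proof.
move=> ha hb; apply: suppM ha hb _ => D S hDS h1 h2.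
by rewrite /evs (cardsD_sub hDS) oddD; rewrite /evs in h1 h2; rewrite (negbTE h1) (negbTE h2).
Qed.

Lemma suppM_od a b : supp (fun S => ods S) a -> supp (fun S => ods S) b -> supp (fun S => evs S) (a * b).
Proof.
move=> ha hb; apply: suppM ha hb _ => D S hDS h1 h2.
by rewrite /evs (cardsD_sub hDS) oddD; rewrite /ods in h1 h2; rewrite h1 h2.
Qed.

Lemma suppM_dg p q a b : supp (dg p) a -> supp (dg q) b -> supp (dg (p + q)) (a * b).
Proof.
move=> ha hb; apply: suppM ha hb _ => D S hDS h1 h2.
by rewrite /dg (cardsD_sub hDS) leq_add.
Qed.

Lemma supp_dg0 a : supp (dg 0) a.
Proof. by []. Qed.

Lemma suppM_prs a b : supp prs a -> supp prs b -> supp prs (a * b).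
Proof.
move=> ha hb; apply: suppM ha hb _ => D S hDS h1 h2 i.
have E : forall z : gen n, (z \in S) = (z \in D) || (z \in S :\: D).
  by move=> z; rewrite inE; case hx: (z \in D) => //=; rewrite (subsetP hDS).
by rewrite !E h1 h2.
Qed.

Lemma supp_sc_ev k : supp (fun S => evs S) (sc k).
Proof. by apply: supp_impl (@supp_gscal R n k) => S ->; rewrite /evs cards0. Qed.

Lemma supp_sc_prs k : supp prs (sc k).
Proof. by apply: supp_impl (@supp_gscal R n k) => S -> i; rewrite !inE. Qed.

Lemma supp_exp (P : {set gen n} -> Prop) a k :
  supp P (1 : G) -> (forall x y, supp P x -> supp P y -> supp P (x * y)) ->
  supp P a -> supp P (a ^+ k).
Proof. by move=> h1 hM ha; elim: k => [|k IH] //; rewrite exprS; apply: hM. Qed.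

Lemma supp_psev (P : {set gen n} -> Prop) (f : nat -> R) a :
  (forall k, supp P (sc k)) -> (forall x y, supp P x -> supp P y -> supp P (x * y)) ->
  supp P a -> supp P (\sum_(k < (2 * n).+1) sc (f k) * a ^+ k).
Proof.
move=> hs hM ha; apply: supp_sum => k _; apply: (hM) => //.
by apply: supp_exp => //; have := hs 1; rewrite sc1.
Qed.

End Spec.

Section Elems.
Variables (R : numFieldType) (n : nat).
Local Notation G := (GA R n).
Implicit Types (a b x y F : G) (S D : {set gen n}).

Definition pb (i : 'I_n) : G := psibar R i.
Definition ps (i : 'I_n) : G := psi R i.

Lemma ppE : (pp R n : G) = \sum_i pb i * ps i.
Proof. by rewrite /pp gsumE. Qed.

Lemma pJpE2 : (pJp R n : G) = \sum_i \sum_j pb i * ps j.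
Proof. by rewrite /pJp gsumE pair_big. Qed.

Lemma pJpE : (pJp R n : G) = (\sum_i pb i) * (\sum_j ps j).
Proof. by rewrite pJpE2 mulr_suml; apply: eq_bigr => i _; rewrite mulr_sumr. Qed.

Lemma memSD D S (z : gen n) : D \subset S -> (z \in S) = (z \in D) || (z \in S :\: D).
Proof. by move=> h; rewrite inE; case hx: (z \in D) => //=; rewrite (subsetP h). Qed.

Lemma supp_pb_od i : supp (fun S => ods S) (pb i).
Proof. by apply: supp_impl (@supp_ggen R n (i, false)) => S ->; rewrite /ods cards1. Qed.
Lemma supp_ps_od i : supp (fun S => ods S) (ps i).
Proof. by apply: supp_impl (@supp_ggen R n (i, true)) => S ->; rewrite /ods cards1. Qed.
Lemma supp_pb_dg i : supp (dg 1) (pb i).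
Proof. by apply: supp_impl (@supp_ggen R n (i, false)) => S ->; rewrite /dg cards1. Qed.
Lemma supp_ps_dg i : supp (dg 1) (ps i).
Proof. by apply: supp_impl (@supp_ggen R n (i, true)) => S ->; rewrite /dg cards1. Qed.

Lemma supp_A_ev : supp (fun S => evs S) (pp R n : G).
Proof.
rewrite ppE; apply: supp_sum => i _; apply: suppM_od; [exact: supp_pb_od|exact: supp_ps_od].
Qed.

Lemma supp_A_dg : supp (dg 2) (pp R n : G).
Proof.
rewrite ppE; apply: supp_sum => i _; apply: (@suppM_dg _ _ 1 1); [exact: supp_pb_dg|exact: supp_ps_dg].
Qed.

Lemma supp_B_ev : supp (fun S => evs S) (pJp R n : G).
Proof.
rewrite pJpE2; apply: supp_sum => i _; apply: supp_sum => j _.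
apply: suppM_od; [exact: supp_pb_od|exact: supp_ps_od].
Qed.

Lemma supp_B_dg : supp (dg 2) (pJp R n : G).
Proof.
rewrite pJpE2; apply: supp_sum => i _; apply: supp_sum => j _.
apply: (@suppM_dg _ _ 1 1); [exact: supp_pb_dg|exact: supp_ps_dg].
Qed.

Lemma supp_A_prs : supp (@prs n) (pp R n : G).
Proof.
rewrite ppE; apply: supp_sum => i _.
apply: (suppM (@supp_ggen R n (i, false)) (@supp_ggen R n (i, true))) => D S hDS hD hSD k.
rewrite !(memSD _ hDS) hSD hD !inE !xpair_eqE /=.
by case: (k == i).
Qed.

Lemma key_term F i j : supp (@prs n) F -> i != j -> (F * (pb i * ps j)) setT = 0.
Proof.
move=> hF hij; apply/eqP; apply/negP => /negP.
move/gmul_supp => [D _ /andP[h1 h2]].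
move/gmul_supp: h2 => [D' hD' /andP[g1 g2]].
have e1 := @supp_ggen R n (i, false) _ g1; have e2 := @supp_ggen R n (j, true) _ g2.
have hP := hF _ h1.
have nit : (i, true) \notin setT :\: D.
  rewrite (memSD _ hD') e2 e1 !inE !xpair_eqE /= andbF /=.
  by rewrite (negbTE hij).
have iD : (i, true) \in D by move: nit; rewrite !inE andbT negbK.
have ifD : (i, false) \in D by rewrite hP.
have : (i, false) \in setT :\: D by rewrite (memSD _ hD') e1 inE eqxx.
by rewrite inE ifD.
Qed.

Lemma key F : supp (@prs n) F -> (F * pJp R n) setT = (F * pp R n) setT.
Proof.
move=> hF; rewrite pJpE2 ppE !mulr_sumr !gsumS; apply: eq_bigr => i _.
rewrite mulr_sumr gsumS (bigD1 i) //= big1 ?addr0 // => j hj.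
by apply: key_term; rewrite // eq_sym.
Qed.

Lemma sq0 (x : G) : x = - x -> x = 0.
Proof.
move=> h; apply/ffunP=> S; rewrite gzeroS.
have := congr1 (fun y : G => y S) h; rewrite /= goppS => /eqP.
by rewrite -subr_eq0 opprK -mulr2n mulrn_eq0 /= => /eqP.
Qed.

Lemma BB : (pJp R n : G) * pJp R n = 0.
Proof.
set bb := \sum_i pb i; set b := \sum_j ps j.
have obb : supp (fun S => ods S) bb by apply: supp_sum => i _; exact: supp_pb_od.
have ob : supp (fun S => ods S) b by apply: supp_sum => i _; exact: supp_ps_od.
have b2 : b * b = 0 by apply: sq0; exact: odd_anticomm.
rewrite pJpE -/bb -/b mulrA -(mulrA bb) (odd_anticomm ob obb).
by rewrite mulrN mulNr -!mulrA b2 !mulr0 oppr0.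
Qed.

End Elems.

Section Main.
Variables (R : numFieldType) (n : nat).
Local Notation G := (GA R n).
Implicit Types (a b x y F : G) (S D : {set gen n}).

Lemma dg2_set0 y : supp (dg 2) y -> y set0 = 0.
Proof.
move=> hy; apply/eqP; apply/negP => /negP /hy.
by rewrite /dg cards0.
Qed.

Lemma sc_set0 (k : R) : sc n k set0 = k.
Proof. by rewrite /sc ffunE eqxx. Qed.

Lemma supp_dg_exp y k : supp (dg 2) y -> supp (dg (2 * k)) (y ^+ k).
Proof.
move=> hy; elim: k => [|k IH]; first exact: supp_dg0.
by rewrite exprS mulnS; apply: suppM_dg.
Qed.

Lemma nil2n y : (1 <= n)%N -> supp (dg 2) y -> y ^+ (2 * n)%N = 0.
Proof.
move=> hn hy; apply/ffunP=> S; rewrite gzeroS; apply/eqP; apply/negP => /negP.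
move/(@supp_dg_exp y (2 * n)%N hy); rewrite /dg => h.
have := leq_trans h (card_gen S).
have H : (2 * n < 2 * (2 * n))%N by rewrite -[X in (X < _)%N]mul1n ltn_pmul2r ?muln_gt0.
by rewrite leqNgt H.
Qed.

Lemma natmul_sc x m : x *+ m = sc n m%:R * x.
Proof. by rewrite sc_nat mulr_natl. Qed.

Lemma coefE (i : nat) : ((factorial i.+1)%:R : R)^-1 * (i.+1)%:R = ((factorial i)%:R)^-1.
Proof.
rewrite factS natrM invfM mulrAC mulVf ?mul1r //.
by rewrite pnatr_eq0.
Qed.

Lemma pow_binom (M Y : G) k : M * Y = Y * M -> Y * Y = 0 ->
  (M + Y) ^+ k.+1 = M ^+ k.+1 + (M ^+ k * Y) *+ k.+1.
Proof.
move=> cMY YY; elim: k => [|k IH]; first by rewrite !expr1 expr0 mul1r.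
have cX : Y * M ^+ k.+1 = M ^+ k.+1 * Y.
  by have := @commrX _ Y M k.+1 (esym cMY).
rewrite exprS IH mulrDl !mulrDr !mulrnAr mulrA -exprS cX.
rewrite -exprS (mulrA Y) (@commrX _ Y M k (esym cMY)) -(mulrA (M ^+ k)) YY mulr0 mul0rn addr0.
by rewrite -addrA -mulrSr.
Qed.

Lemma EE_split (M Y : G) : M * Y = Y * M -> Y * Y = 0 -> M ^+ (2 * n) = 0 ->
  EE (M + Y) = EE M * (1 + Y).
Proof.
move=> cMY YY Mn.
have EY : EE M * Y = \sum_(i < (2 * n)%N) sc n ((factorial i)%:R^-1) * (M ^+ i * Y).
  rewrite /EE mulr_suml big_ord_recr /= Mn mulr0 mul0r addr0.
  by apply: eq_bigr => i _; rewrite -mulrA.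
rewrite mulrDr mulr1 EY /EE !big_ord_recl /= !expr0.
under eq_bigr => i _ do rewrite pow_binom // mulrDr.
rewrite big_split /= addrA; congr (_ + _).
apply: eq_bigr => i _.
by rewrite natmul_sc mulrA -scM coefE.
Qed.

End Main.

Theorem lemma3 (R : numClosedFieldType) (expR : R -> R) (n : nat) (hn : (1 <= n)%N)
    (r : nat) (g h : nat -> R) :
  berezin (gmul (gpow (pp R n) r)
                (gexp expR (gadd (psev h (pp R n)) (gmul (pJp R n) (psev g (pp R n))))))
  =
  berezin (gmul (gpow (pp R n) r)
                (gmul (gexp expR (psev h (pp R n)))
                      (gadd (gone R n) (gmul (pp R n) (psev g (pp R n)))))).
Proof.
rewrite /berezin !gaddE' !gexpE !gpowE !gmulM goneE.
set A : GA R n := pp R n.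
set B : GA R n := pJp R n.
set Gg : GA R n := psev g A.
set M : GA R n := \sum_(i < (2 * n)%N) sc n (h i.+1) * A ^+ i.+1.
have hH : psev h A = sc n (h 0) + M.
  by rewrite psevE big_ord_recl /= expr0 mulr1.
have Mdg : supp (dg 2) M.
  apply: supp_sum => i _; apply: (@suppM_dg _ _ 0 2); first exact: supp_dg0.
  rewrite exprS; apply: (@suppM_dg _ _ 2 0); [exact: supp_A_dg|exact: supp_dg0].
have BGdg : supp (dg 2) (B * Gg).
  apply: (@suppM_dg _ _ 2 0); [exact: supp_B_dg|exact: supp_dg0].
have Hset0 : psev h A set0 = h 0 by rewrite hH gaddS sc_set0 dg2_set0 // addr0.
have Xset0 : (psev h A + B * Gg) set0 = h 0 by rewrite gaddS Hset0 dg2_set0 // addr0.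
rewrite Xset0 Hset0.
have e2 : psev h A + sc n (- h 0) = M by rewrite hH addrAC -scD subrr sc0 add0r.
have e1 : psev h A + B * Gg + sc n (- h 0) = M + B * Gg by rewrite addrAC e2.
rewrite e1 e2.
have Gev : supp (fun S => evs S) Gg.
  rewrite /Gg psevE; apply: supp_psev; [exact: supp_sc_ev|exact: suppM_ev|exact: supp_A_ev].
have Gprs : supp (@prs n) Gg.
  rewrite /Gg psevE; apply: supp_psev; [exact: supp_sc_prs|exact: suppM_prs|exact: supp_A_prs].
have BGev : supp (fun S => evs S) (B * Gg) by apply: suppM_ev => //; exact: (@supp_B_ev R n).
have cMBG : M * (B * Gg) = (B * Gg) * M by rewrite (even_comm M BGev).
have BGBG : (B * Gg) * (B * Gg) = 0.
  rewrite -mulrA (mulrA Gg) -(even_comm Gg (@supp_B_ev R n)) -mulrA mulrA.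
  by rewrite BB mul0r.
rewrite EE_split //; last exact: nil2n.
rewrite !mulrA !mulrDr !mulr1 !gaddS; congr (_ + _).
rewrite (even_comm Gg (@supp_B_ev R n)) (even_comm Gg (@supp_A_ev R n)) !mulrA.
apply: key.
have one_prs : supp (@prs n) (1 : GA R n) by rewrite -(sc1 R n); exact: supp_sc_prs.
have Aprs := @supp_A_prs R n.
have Mprs : supp (@prs n) M.
  apply: supp_sum => i _; apply: suppM_prs; first exact: supp_sc_prs.
  by apply: supp_exp => //; exact: suppM_prs.
apply: suppM_prs => //; apply: suppM_prs; last first.
  apply: supp_sum => k _; apply: suppM_prs; first exact: supp_sc_prs.
  by apply: supp_exp => //; exact: suppM_prs.
apply: suppM_prs; last exact: supp_sc_prs.
by apply: supp_exp => //; exact: suppM_prs.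
Qed.
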